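(* Let $\mathcal H=(V,E)$ be a hypergraph with splitting functions and let $R\subseteq V$ satisfy $0<\mathrm{vol}(R)\le\mathrm{vol}(\bar R)$. Let $\varepsilon_0=\mathrm{vol}(R)/\mathrm{vol}(\bar R)$, let $\varepsilon\in[\varepsilon_0,\varepsilon_0+1)$, and set $\mu=\varepsilon-\varepsilon_0\ge0$. Let $S^*$ be a minimizer of $\mathrm{HLC}$ over all subsets of $V$; this is the set returned by Algorithm 1. Let $T\subseteq V$ satisfy $0<\mathrm{vol}(T)\le\mathrm{vol}(\bar T)$, and suppose that for some $\beta\in\left(\frac{2\mu}{1+2\mu},1\right)$, $$\frac{\mathrm{vol}(T\cap R)}{\mathrm{vol}(T)}\ge\frac{\mathrm{vol}(\bar T\cap R)}{\mathrm{vol}(\bar T)}+\beta.$$ Then $$\mathrm{ncut}(S^* )\le\frac{1}{\beta+2\mu\beta-2\mu}\,\mathrm{ncut}(T).$$ In particular, when $\varepsilon=\varepsilon_0$ we get $\mathrm{ncut}(S^* )\le\frac1\beta\mathrm{ncut}(T)$.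
   Context: A hypergraph $\mathcal H=(V,E)$ has a finite node set $V$, and each hyperedge $e\in E$ is a subset of $V$. Each hyperedge $e$ carries a splitting function $w_e:2^e\to\mathbb R_{\ge0}$ satisfying $w_e(A)=w_e(e\setminus A)$ for all $A\subseteq e$ and $w_e(\emptyset)=w_e(e)=0$. For $S\subseteq V$, $\mathrm{cut}_{\mathcal H}(S)=\sum_{e\in E}w_e(e\cap S)$. The degree of $v$ is $d_v=\sum_{e\ni v}w_e(\{v\})$, and $\mathrm{vol}(S)=\sum_{v\in S}d_v$. Write $\bar S=V\setminus S$. Hypergraph normalized cut is $\mathrm{ncut}(S)=\frac{\mathrm{cut}_{\mathcal H}(S)}{\mathrm{vol}(S)}+\frac{\mathrm{cut}_{\mathcal H}(\bar S)}{\mathrm{vol}(\bar S)}$. Define $\Omega_{R,\varepsilon}(S)=\mathrm{vol}(S\cap R)-\varepsilon\,\mathrm{vol}(S\cap\bar R)$. Set $\mathrm{HLC}(S)=\mathrm{cut}_{\mathcal H}(S)/\Omega_{R,\varepsilon}(S)$ if $\Omega_{R,\varepsilon}(S)>0$, and $\mathrm{HLC}(S)=\infty$ otherwise. *)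

(* Defs.v *)
From HB Require Import structures.
From mathcomp Require Import all_boot all_order all_algebra.
Set Implicit Arguments. Unset Strict Implicit. Unset Printing Implicit Defensive.
Import Order.TTheory GRing.Theory Num.Theory.
Local Open Scope ring_scope.

Section Hypergraph.
Variables (R : realFieldType) (V I : finType).
Variables (e : I -> {set V}) (w : I -> {set V} -> R).

Definition splitting_functions : Prop :=
  forall i : I,
    (forall A : {set V}, A \subset e i -> 0 <= w i A) /\
    (forall A : {set V}, A \subset e i -> w i A = w i (e i :\: A)) /\
    w i set0 = 0 /\ w i (e i) = 0.

Definition hcut (S : {set V}) : R := \sum_(i : I) w i (e i :&: S).

Definition deg (v : V) : R := \sum_(i : I | v \in e i) w i [set v].

Definition vol (S : {set V}) : R := \sum_(v in S) deg v.

Definition ncut (S : {set V}) : R :=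
  hcut S / vol S + hcut (~: S) / vol (~: S).

Definition Omega (Rs : {set V}) (eps : R) (S : {set V}) : R :=
  vol (S :&: Rs) - eps * vol (S :&: ~: Rs).

(* HLC with values in R ∪ {∞}: None stands for ∞ *)
Definition HLC (Rs : {set V}) (eps : R) (S : {set V}) : option R :=
  if 0 < Omega Rs eps S then Some (hcut S / Omega Rs eps S) else None.

Definition ext_le (a b : option R) : bool :=
  match a, b with
  | _, None => true
  | None, Some _ => false
  | Some x, Some y => x <= y
  end.

Definition is_HLC_minimizer (Rs : {set V}) (eps : R) (S : {set V}) : Prop :=
  forall S' : {set V}, ext_le (HLC Rs eps S) (HLC Rs eps S').

End Hypergraph.

(* Main.v *)
Set Warnings "-notation-overridden -ambiguous-paths".
Require Import Defs.
From HB Require Import structures.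
From mathcomp Require Import all_boot all_order all_algebra.
From mathcomp Require Import ring lra.
Import Order.TTheory GRing.Theory Num.Theory.
Local Open Scope ring_scope.

Section Aux.
Variables (R : realFieldType) (V I : finType) (e : I -> {set V}) (w : I -> {set V} -> R).
Hypothesis sf : splitting_functions e w.

Lemma deg_ge0 v : 0 <= deg e w v.
Proof.
rewrite /deg; apply: sumr_ge0 => i vi; have [h _] := sf i; apply: h.
by rewrite sub1set.
Qed.

Lemma vol_ge0 S : 0 <= vol e w S.
Proof. by apply: sumr_ge0 => v _; apply: deg_ge0. Qed.

Lemma vol_split S A : vol e w S = vol e w (S :&: A) + vol e w (S :&: ~: A).
Proof. by rewrite /vol (big_setID A) setDE. Qed.

Lemma hcut_ge0 S : 0 <= hcut e w S.
Proof. apply: sumr_ge0 => i _; have [h _] := sf i; apply: h; exact: subsetIl. Qed.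

Lemma hcutC S : hcut e w (~: S) = hcut e w S.
Proof.
apply: eq_bigr => i _; have [_ [h _]] := sf i.
rewrite (h (e i :&: S)) ?subsetIl //; congr (w i _).
by rewrite setDIr setDv set0U setDE.
Qed.
End Aux.
Lemma omT_bound (R : realFieldType) (a c t tb rb eps0 mu beta : R) :
  0 < t -> t <= tb -> 0 <= a -> a <= t -> 0 <= c -> 0 < rb -> a + c <= rb ->
  t + tb = a + c + rb -> eps0 * rb = a + c -> 0 <= mu -> beta < 1 ->
  0 <= eps0 ->
  c / tb + beta <= a / t ->
  (beta + 2 * mu * beta - 2 * mu) * t * tb <= (a - (eps0 + mu) * (t - a)) * rb.
Proof.
move=> t0 ttb a0 hat c0 rb0 rrb hn he mu0 b1 e0 h.
have tb0 : 0 < tb by lra.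
set x := a / t in h; set y := c / tb in h.
have ax : a = x * t by rewrite /x mulfVK // gt_eqF.
have cy : c = y * tb by rewrite /y mulfVK // gt_eqF.
have H1 : c * t + beta * t * tb <= a * tb.
  rewrite ax cy. have : 0 <= t * tb * (x - y - beta) by apply: mulr_ge0; [apply: mulr_ge0; lra| lra].
  lra.
set r := a + c in hn he.
set n := t + tb.
set D := a * n - r * t - beta * t * tb.
have D0 : 0 <= D by rewrite /D /n /r; lra.
have H3 : beta * t <= r.
  have : beta * t * tb <= r * tb.
    have : a * n <= r * n by rewrite ler_pM2r /n /r; lra.
    rewrite /n /r; lra.
  by rewrite ler_pM2r.
have n0 : 0 < n by rewrite /n; lra.
have key : ((a - (eps0 + mu) * (t - a)) * rb - (beta + 2 * mu * beta - 2 * mu) * t * tb) * n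
  = rb * (1 + eps0 + mu) * D + t * mu * rb * (tb + (1 - beta) * t - rb)
    + t * mu * (1 - beta) * n * (2 * tb - rb).
  have htb : tb = r + rb - t by rewrite -hn; ring.
  rewrite /D /n htb -he; ring.
have : 0 <= ((a - (eps0 + mu) * (t - a)) * rb - (beta + 2 * mu * beta - 2 * mu) * t * tb) * n.
  rewrite key; apply: addr_ge0; first apply: addr_ge0.
  - apply: mulr_ge0 => //; apply: mulr_ge0; lra.
  - apply: mulr_ge0; first by apply: mulr_ge0; [apply: mulr_ge0|]; lra.
    rewrite mulrBl mul1r; lra.
  - apply: mulr_ge0.
      apply: mulr_ge0; [apply: mulr_ge0; [apply: mulr_ge0|]|]; try lra.
    rewrite /r in hn; lra.
rewrite pmulr_lge0 // subr_ge0 //.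
Qed.

Lemma omS_bound (R : realFieldType) (p q sb r rb eps0 eps : R) :
  0 <= p -> 0 <= q -> p <= r -> r - p <= sb -> p + q + sb = r + rb ->
  eps0 * rb = r -> eps0 <= eps -> 0 < rb ->
  (p - eps * q) * rb <= (p + q) * sb.
Proof.
move=> p0 q0 pr rps hn he ee rb0.
have h1 : (p - eps * q) * rb <= (p - eps0 * q) * rb.
  rewrite ler_pM2r //; have : eps0 * q <= eps * q by rewrite ler_wpM2r.
  lra.
apply: le_trans h1 _.
have -> : (p - eps0 * q) * rb = (p + q) * sb - ((p + q) * (r - p) + sb * q).
  have hsb : sb = r + rb - p - q by rewrite -hn; ring.
  rewrite hsb -he; ring.
have : 0 <= (p + q) * (r - p) + sb * q.
  apply: addr_ge0; apply: mulr_ge0; lra.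
lra.
Qed.

Lemma final (R : realFieldType) (cS cT s sb t tb OmS OmT rb b : R) :
  0 <= cS -> 0 < s -> 0 < sb -> 0 < t -> 0 < tb -> 0 < OmS -> 0 < OmT -> 0 < rb -> 0 < b ->
  s + sb = t + tb ->
  cS / OmS <= cT / OmT -> OmS * rb <= s * sb -> b * t * tb <= OmT * rb ->
  cS / s + cS / sb <= b^-1 * (cT / t + cT / tb).
Proof.
move=> cS0 s0 sb0 t0 tb0 o0 o'0 rb0 b0 hn h1 h2 h3.
have cT0 : 0 <= cT.
  have : 0 <= cT / OmT by apply: le_trans h1; apply: divr_ge0; lra.
  by rewrite pmulr_lge0 // invr_gt0.
have e1 : cS / s + cS / sb = cS * (s + sb) / (s * sb) by field; apply/andP; split; rewrite gt_eqF.
have e2 : b^-1 * (cT / t + cT / tb) = cT * (t + tb) / (b * t * tb).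
  by field; rewrite !gt_eqF.
rewrite e1 e2 hn.
rewrite ler_pdivrMr ?mulr_gt0 // mulrAC ler_pdivlMr ?mulr_gt0 //.
have h1' : cS * OmT <= cT * OmS.
  by move: h1; rewrite ler_pdivrMr // mulrAC ler_pdivlMr.
set n := t + tb.
have n0 : 0 <= n by rewrite /n; lra.
apply: (@le_trans _ _ (cS * n * (OmT * rb))).
  by apply: ler_wpM2l => //; apply: mulr_ge0.
apply: (@le_trans _ _ (cT * n * (OmS * rb))).
  have : cS * OmT * (n * rb) <= cT * OmS * (n * rb) by apply: ler_wpM2r => //; apply: mulr_ge0; lra.
  by rewrite -!mulrA (mulrCA OmT) (mulrCA OmS) !mulrA.
by apply: ler_wpM2l => //; apply: mulr_ge0.
Qed.

Theorem theorem5 (R : realFieldType) (V I : finType)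
  (e : I -> {set V}) (w : I -> {set V} -> R)
  (Rs : {set V}) (eps beta : R) (Sstar T : {set V}) :
  splitting_functions e w ->
  0 < vol e w Rs -> vol e w Rs <= vol e w (~: Rs) ->
  let eps0 := vol e w Rs / vol e w (~: Rs) in
  let mu := eps - eps0 in
  eps0 <= eps -> eps < eps0 + 1 ->
  is_HLC_minimizer e w Rs eps Sstar ->
  0 < vol e w T -> vol e w T <= vol e w (~: T) ->
  2 * mu / (1 + 2 * mu) < beta -> beta < 1 ->
  vol e w (T :&: Rs) / vol e w T >=
    vol e w (~: T :&: Rs) / vol e w (~: T) + beta ->
  ncut e w Sstar <= (beta + 2 * mu * beta - 2 * mu)^-1 * ncut e w T.
Proof.
move=> sf r0 rle eps0 mu he0 he1 hmin t0 tle hb0 hb1 hcond.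
have rb0 : 0 < vol e w (~: Rs) by apply: lt_le_trans rle.
have e0r : eps0 * vol e w (~: Rs) = vol e w Rs by rewrite /eps0 mulfVK // gt_eqF.
have e00 : 0 <= eps0 by rewrite /eps0 divr_ge0 // ?vol_ge0.
have mu0 : 0 <= mu by rewrite /mu subr_ge0.
have b'0 : 0 < beta + 2 * mu * beta - 2 * mu.
  have h1 : 0 < 1 + 2 * mu by lra.
  move: hb0; rewrite ltr_pdivrMr //; lra.
have vT := @vol_split _ _ _ e w T Rs.
have vTc := @vol_split _ _ _ e w (~: T) Rs.
have vR := @vol_split _ _ _ e w Rs T.
have vRc := @vol_split _ _ _ e w (~: Rs) T.
have vall : vol e w T + vol e w (~: T) = vol e w Rs + vol e w (~: Rs).
  rewrite vT vTc [in RHS]vR vRc !(setIC Rs) !(setIC (~: Rs)); lra.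
have hR : vol e w Rs = vol e w (T :&: Rs) + vol e w (~: T :&: Rs) by rewrite vR !(setIC Rs).
have hOT := @omT_bound R (vol e w (T :&: Rs)) (vol e w (~: T :&: Rs)) (vol e w T)
   (vol e w (~: T)) (vol e w (~: Rs)) eps0 mu beta t0 tle (@vol_ge0 _ _ _ _ _ sf _) _ (@vol_ge0 _ _ _ _ _ sf _)
   rb0 _ _ _ mu0 hb1 e00 hcond.
have epsE : eps = eps0 + mu by rewrite /mu; ring.
have hv1 : vol e w (T :&: Rs) <= vol e w T by rewrite vT; have := @vol_ge0 _ _ _ _ _ sf (T :&: ~: Rs); lra.
have {}hOT : (beta + 2 * mu * beta - 2 * mu) * vol e w T * vol e w (~: T) <=
    Omega e w Rs eps T * vol e w (~: Rs).
  rewrite /Omega epsE. have -> : vol e w (T :&: ~: Rs) = vol e w T - vol e w (T :&: Rs) by rewrite vT; ring.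
  apply: hOT => //; lra.
have tb0 : 0 < vol e w (~: T) by lra.
have OT0 : 0 < Omega e w Rs eps T.
  have : 0 < Omega e w Rs eps T * vol e w (~: Rs).
    apply: lt_le_trans hOT; apply: mulr_gt0 => //; apply: mulr_gt0 => //.
  by rewrite pmulr_lgt0.
have := hmin T; rewrite /HLC (ifT _ _ OT0).
case: ifP => // OS0 hle; move: OS0 => /idP OS0; rewrite /= in hle.
have vS := @vol_split _ _ _ e w Sstar Rs.
have vSc := @vol_split _ _ _ e w (~: Sstar) Rs.
have vR2 := @vol_split _ _ _ e w Rs Sstar.
have hpq : vol e w (Sstar :&: Rs) <= vol e w Rs by rewrite vR2 setIC; have := @vol_ge0 _ _ _ _ _ sf (Rs :&: ~: Sstar); lra.
have hrp : vol e w Rs - vol e w (Sstar :&: Rs) <= vol e w (~: Sstar).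
  rewrite vR2 (setIC Rs Sstar) (setIC Rs) vSc; have := @vol_ge0 _ _ _ _ _ sf (~: Sstar :&: ~: Rs); lra.
have vall2 : vol e w Sstar + vol e w (~: Sstar) = vol e w Rs + vol e w (~: Rs).
  have vRc2 := @vol_split _ _ _ e w (~: Rs) Sstar.
  rewrite vS vSc vR2 vRc2 !(setIC Rs) !(setIC (~: Rs)); lra.
have hOS := @omS_bound R (vol e w (Sstar :&: Rs)) (vol e w (Sstar :&: ~: Rs)) (vol e w (~: Sstar))
  (vol e w Rs) (vol e w (~: Rs)) eps0 eps (@vol_ge0 _ _ _ _ _ sf _) (@vol_ge0 _ _ _ _ _ sf _) hpq hrp _ e0r he0 rb0.
have {}hOS := hOS ltac:(lra).
rewrite -vS in hOS.
have s0 : 0 < vol e w Sstar.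
  have : Omega e w Rs eps Sstar <= vol e w (Sstar :&: Rs).
    rewrite /Omega; have : 0 <= eps * vol e w (Sstar :&: ~: Rs) by apply: mulr_ge0; [lra|apply: vol_ge0].
    lra.
  have := @vol_ge0 _ _ _ _ _ sf (Sstar :&: ~: Rs); lra.
have sb0 : 0 < vol e w (~: Sstar).
  have : 0 < vol e w Sstar * vol e w (~: Sstar).
    apply: lt_le_trans hOS; apply: mulr_gt0 => //.
  by rewrite pmulr_rgt0.
rewrite /ncut !(@hcutC _ _ _ _ _ sf).
apply: (@final R _ _ _ _ _ _ (Omega e w Rs eps Sstar) (Omega e w Rs eps T) (vol e w (~: Rs))) => //.
- exact: (@hcut_ge0 _ _ _ _ _ sf).
- lra.
Qed.
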